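(* Let $G$ be an edge-colored graph of order $n$ such that $\delta^c(G)=n-1$ (so $G$ is complete and any two edges sharing a vertex have distinct colors). Then for any subset $S\subseteq V(G)$ with $|S|=5$, $G[S]$ contains a rainbow $C_4$.
   Context: An edge-colored graph is a finite simple graph $G$ with a map $C:E(G)\to\mathbb{N}$. The color degree $d^c(v)$ is the number of distinct colors on edges incident to $v$; $\delta^c(G)=\min_v d^c(v)$. A subgraph is rainbow if all its edges have distinct colors; $C_4$ is a cycle of length 4; $G[S]$ is the induced subgraph. *)

(* Defs.v *)
From mathcomp Require Import all_boot.
Set Implicit Arguments. Unset Strict Implicit. Unset Printing Implicit Defensive.

Definition simple_graph (T : finType) (e : rel T) : Prop :=
  irreflexive e /\ symmetric e.

(* An edge-colouring: a colour for every unordered pair, i.e. a symmetric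
   map; only its values on edges (e x y) are relevant. *)
Definition edge_coloring (T : finType) (col : T -> T -> nat) : Prop :=
  forall x y, col x y = col y x.

Definition color_degree (T : finType) (e : rel T) (col : T -> T -> nat) (v : T) : nat :=
  size (undup [seq col v u | u <- enum T & e v u]).

Definition has_rainbow_C4_in (T : finType) (e : rel T) (col : T -> T -> nat)
    (S : {set T}) : Prop :=
  exists a b c d : T,
    [/\ [/\ a \in S, b \in S, c \in S & d \in S],
        uniq [:: a; b; c; d],
        [/\ e a b, e b c, e c d & e d a] &
        uniq [:: col a b; col b c; col c d; col d a]].

(* Main.v *)
Require Import Defs.
From mathcomp Require Import all_boot zify.
Lemma card_filter (T : finType) (p : pred T) : size [seq u <- enum T | p u] = #|p|.
Proof. rewrite cardE size_filter enumT /enum_mem size_filter. done. Qed.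

Lemma uniq_map_inj (A B : eqType) (f : A -> B) s x y :
  uniq (map f s) -> x \in s -> y \in s -> f x = f y -> x = y.
Proof.
move=> U xs ys fxy; apply/eqP/negPn/negP => nxy.
have P := perm_to_rem xs.
have : uniq (map f (x :: rem x s)) by rewrite -(perm_uniq (perm_map f P)).
rewrite /= fxy => /andP [] /negP N _; apply: N.
apply: map_f. by rewrite mem_rem_uniq ?inE ?(map_uniq U) // eq_sym nxy.
Qed.

Lemma props (T : finType) (e : rel T) (col : T -> T -> nat) :
  simple_graph e ->
  (forall v : T, color_degree e col v = #|T| - 1) ->
  (forall x y, x != y -> e x y) /\
  (forall v x y, x != v -> y != v -> x != y -> col v x != col v y).
Proof.
move=> [irr sym] H.
have key : forall v, #|e v| = #|T| - 1 /\ uniq [seq col v u | u <- enum T & e v u].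
  move=> v; have := H v; rewrite /color_degree.
  have s1 := size_undup [seq col v u | u <- enum T & e v u].
  rewrite size_map card_filter in s1.
  have s2 : #|e v| <= #|T| - 1.
    rewrite subn1 -(cardC1 v); apply: subset_leq_card; apply/subsetP => u.
    rewrite !inE => evu; apply/negP => /eqP E'; subst u; by move: (irr v); rewrite (evu : e v v).
  move=> E; split; first by apply/eqP; rewrite eqn_leq s2 -E s1.
  apply/negPn/negP; rewrite -ltn_size_undup size_map card_filter E.
  by rewrite ltnNge s2.
split.
  move=> x y nxy; case: (key x) => E _.
  have S : e x \subset predC1 x.
    apply/subsetP => u; rewrite !inE => evu; apply/negP => /eqP E'; subst u; by move: (irr x); rewrite (evu : e x x).
  have E2 : #|e x| = #|predC1 x| by rewrite cardC1 E subn1.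
  move/(subset_cardP E2): S => EQ.
  have := EQ y; rewrite !inE eq_sym nxy. by move=> E3; have : y \in e x by rewrite E3.
move=> v x y xv yv nxy; apply/negP => /eqP cxy.
case: (key v) => E U.
have ex : forall z, z != v -> e v z.
  move=> z zv.
  have S : e v \subset predC1 v.
    apply/subsetP => u; rewrite !inE => evu; apply/negP => /eqP E'; subst u; by move: (irr v); rewrite (evu : e v v).
  have E2 : #|e v| = #|predC1 v| by rewrite cardC1 E subn1.
  move/(subset_cardP E2): S => EQ.
  have := EQ z; rewrite !inE zv. by move=> E3; have : z \in e v by rewrite E3.
have hx : x \in [seq u <- enum T | e v u] by rewrite mem_filter ex // mem_enum.
have hy : y \in [seq u <- enum T | e v u] by rewrite mem_filter ex // mem_enum.
by move: (@uniq_map_inj _ _ _ _ _ _ U hx hy cxy) => /eqP; rewrite (negbTE nxy).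
Qed.

Section Main.
Variables (T : finType) (e : rel T) (col : T -> T -> nat).
Hypothesis sc : forall x y, col x y = col y x.
Hypothesis comp : forall x y, x != y -> e x y.
Hypothesis pr : forall v x y, x != v -> y != v -> x != y -> col v x != col v y.

Lemma cyc (S : {set T}) a b c d :
  [/\ a \in S, b \in S, c \in S & d \in S] -> uniq [:: a; b; c; d] ->
  col a b != col c d -> col b c != col d a -> has_rainbow_C4_in e col S.
Proof.
move=> HS U h1 h2; exists a, b, c, d; split => //.
  move: U; rewrite /= !inE !negb_or => /and4P [/and3P [ab ac ad] /andP [bc bd] cd _].
  split; apply: comp => //; by rewrite eq_sym.
move: U; rewrite /= !inE !negb_or => /and4P [/and3P [ab ac ad] /andP [bc bd] cd _].
rewrite h1 /= !andbT.
have -> : (col a b == col b c) = false.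
  by rewrite [col a b]sc; apply/negbTE/pr; rewrite // eq_sym.
have -> : (col a b == col d a) = false.
  by rewrite [col d a]sc; apply/negbTE/pr; rewrite // eq_sym.
have -> : (col b c == col c d) = false.
  by rewrite [col b c]sc; apply/negbTE/pr; rewrite // eq_sym.
have -> : (col c d == col d a) = false.
  by rewrite [col c d]sc; apply/negbTE/pr; rewrite // eq_sym.
by rewrite h2.
Qed.

Lemma four (S : {set T}) i j k l :
  [/\ i \in S, j \in S, k \in S & l \in S] -> uniq [:: i; j; k; l] ->
  has_rainbow_C4_in e col S \/
  2 <= (col i j == col k l) + (col i k == col j l) + (col i l == col j k).
Proof.
move=> HS U.
case: (eqVneq (col i j) (col k l)) => h1;
case: (eqVneq (col i k) (col j l)) => h2;
case: (eqVneq (col i l) (col j k)) => h3; try by right.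
- left; apply: (@cyc S i k j l).
  + by case: HS.
  + move: U; rewrite /= !inE !negb_or (eq_sym k j).
    by move=> /and4P [/and3P [-> -> ->] /andP [-> ->] -> _].
  + by [].
  + by rewrite [col k j]sc [col l i]sc eq_sym.
- left; apply: (@cyc S i j k l) => //.
  by rewrite [col l i]sc eq_sym.
- left; apply: (@cyc S i j l k).
  + by case: HS.
  + move: U; rewrite /= !inE !negb_or (eq_sym l k).
    by move=> /and4P [/and3P [-> -> ->] /andP [-> ->] -> _].
  + by rewrite [col l k]sc.
  + by rewrite [col k i]sc eq_sym.
- left; apply: (@cyc S i j k l) => //.
  by rewrite [col l i]sc eq_sym.
Qed.
End Main.
Lemma final (xabcd xacbd xadbc xabcf xacbf xafbc xabdf xadbf xafbd xacdf xadcf xafcd xbcdf xbdcf xbfcd : nat) :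
  2 <= xabcd + xacbd + xadbc ->
  2 <= xabcf + xacbf + xafbc ->
  2 <= xabdf + xadbf + xafbd ->
  2 <= xacdf + xadcf + xafcd ->
  2 <= xbcdf + xbdcf + xbfcd ->
  xabcd + xabcf + xabdf <= 1 ->
  xacbd + xacbf + xacdf <= 1 ->
  xadbc + xadbf + xadcf <= 1 ->
  xafbc + xafbd + xafcd <= 1 ->
  xadbc + xafbc + xbcdf <= 1 ->
  xacbd + xafbd + xbdcf <= 1 ->
  xacbf + xadbf + xbfcd <= 1 ->
  xabcd + xafcd + xbfcd <= 1 ->
  xabcf + xadcf + xbdcf <= 1 ->
  xabdf + xacdf + xbcdf <= 1 -> False.
Proof. lia. Qed.

Lemma excl (x y z w : nat) (b1 b2 b3 : bool) :
  (b1 -> x = y) -> (b2 -> x = z) -> (b3 -> x = w) ->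
  y != z -> y != w -> z != w -> b1 + b2 + b3 <= 1.
Proof.
by case: b1; case: b2; case: b3 => //= h1 h2 h3;
  rewrite -?(h1 isT) -?(h2 isT) -?(h3 isT) ?eqxx.
Qed.

Lemma tri (T : finType) (col : T -> T -> nat) :
  (forall x y, col x y = col y x) ->
  (forall v x y, x != v -> y != v -> x != y -> col v x != col v y) ->
  forall r s t, r != s -> r != t -> s != t ->
  [/\ col r s != col r t, col r s != col s t & col r t != col s t].
Proof.
move=> sc pr r s t rs rt st; split.
- by apply: pr; rewrite // eq_sym.
- by rewrite [col r s]sc; apply: pr; rewrite // eq_sym.
- by rewrite [col r t]sc [col s t]sc; apply: pr.
Qed.

Theorem lemma10 (T : finType) (e : rel T) (col : T -> T -> nat) :
  simple_graph e -> edge_coloring col ->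
  (forall v : T, color_degree e col v = #|T| - 1) ->
  forall S : {set T}, #|S| = 5 -> has_rainbow_C4_in e col S.
Proof.
move=> sg sc H S S5.
have [comp pr] := @props T e col sg H.
have : size (enum S) = 5 by rewrite -cardE.
have U := enum_uniq S.
have M : forall x, x \in enum S -> x \in S by move=> x; rewrite mem_enum.
case E: (enum S) U M => [|a [|b [|c [|d [|f [|? ?]]]]]] //= U M _.
have aS : a \in S by apply: M; rewrite !inE eqxx ?orbT.
have bS : b \in S by apply: M; rewrite !inE eqxx ?orbT.
have cS : c \in S by apply: M; rewrite !inE eqxx ?orbT.
have dS : d \in S by apply: M; rewrite !inE eqxx ?orbT.
have fS : f \in S by apply: M; rewrite !inE eqxx ?orbT.
move: U; rewrite !inE !negb_or. move=> U.
case/and5P: U => /and4P [ab ac ad af] /and3P [bc bd bf] /andP [cd cf] df _.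
have ba : b != a by rewrite eq_sym.
have ca : c != a by rewrite eq_sym.
have da : d != a by rewrite eq_sym.
have fa : f != a by rewrite eq_sym.
have cb : c != b by rewrite eq_sym.
have db : d != b by rewrite eq_sym.
have fb : f != b by rewrite eq_sym.
have dc : d != c by rewrite eq_sym.
have fc : f != c by rewrite eq_sym.
have fd : f != d by rewrite eq_sym.
have Uabcd : uniq [:: a; b; c; d] by rewrite /= !inE !negb_or ab ac ad bc bd cd.
have [R|Fabcd] := @four T e col sc comp pr S a b c d (And4 aS bS cS dS) Uabcd; first by exact R.
have Uabcf : uniq [:: a; b; c; f] by rewrite /= !inE !negb_or ab ac af bc bf cf.
have [R|Fabcf] := @four T e col sc comp pr S a b c f (And4 aS bS cS fS) Uabcf; first by exact R.
have Uabdf : uniq [:: a; b; d; f] by rewrite /= !inE !negb_or ab ad af bd bf df.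
have [R|Fabdf] := @four T e col sc comp pr S a b d f (And4 aS bS dS fS) Uabdf; first by exact R.
have Uacdf : uniq [:: a; c; d; f] by rewrite /= !inE !negb_or ac ad af cd cf df.
have [R|Facdf] := @four T e col sc comp pr S a c d f (And4 aS cS dS fS) Uacdf; first by exact R.
have Ubcdf : uniq [:: b; c; d; f] by rewrite /= !inE !negb_or bc bd bf cd cf df.
have [R|Fbcdf] := @four T e col sc comp pr S b c d f (And4 bS cS dS fS) Ubcdf; first by exact R.
have Gab : (col a b == col c d) + (col a b == col c f) + (col a b == col d f) <= 1.
  case: (@tri T col sc pr _ _ _ cd cf df) => T1 T2 T3.
  apply: (@excl (col a b) _ _ _ _ _ _ _ _ _ T1 T2 T3); by move=> /eqP ->.
have Gac : (col a c == col b d) + (col a c == col b f) + (col a c == col d f) <= 1.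
  case: (@tri T col sc pr _ _ _ bd bf df) => T1 T2 T3.
  apply: (@excl (col a c) _ _ _ _ _ _ _ _ _ T1 T2 T3); by move=> /eqP ->.
have Gad : (col a d == col b c) + (col a d == col b f) + (col a d == col c f) <= 1.
  case: (@tri T col sc pr _ _ _ bc bf cf) => T1 T2 T3.
  apply: (@excl (col a d) _ _ _ _ _ _ _ _ _ T1 T2 T3); by move=> /eqP ->.
have Gaf : (col a f == col b c) + (col a f == col b d) + (col a f == col c d) <= 1.
  case: (@tri T col sc pr _ _ _ bc bd cd) => T1 T2 T3.
  apply: (@excl (col a f) _ _ _ _ _ _ _ _ _ T1 T2 T3); by move=> /eqP ->.
have Gbc : (col a d == col b c) + (col a f == col b c) + (col b c == col d f) <= 1.
  case: (@tri T col sc pr _ _ _ ad af df) => T1 T2 T3.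
  apply: (@excl (col b c) _ _ _ _ _ _ _ _ _ T1 T2 T3); by move=> /eqP ->.
have Gbd : (col a c == col b d) + (col a f == col b d) + (col b d == col c f) <= 1.
  case: (@tri T col sc pr _ _ _ ac af cf) => T1 T2 T3.
  apply: (@excl (col b d) _ _ _ _ _ _ _ _ _ T1 T2 T3); by move=> /eqP ->.
have Gbf : (col a c == col b f) + (col a d == col b f) + (col b f == col c d) <= 1.
  case: (@tri T col sc pr _ _ _ ac ad cd) => T1 T2 T3.
  apply: (@excl (col b f) _ _ _ _ _ _ _ _ _ T1 T2 T3); by move=> /eqP ->.
have Gcd : (col a b == col c d) + (col a f == col c d) + (col b f == col c d) <= 1.
  case: (@tri T col sc pr _ _ _ ab af bf) => T1 T2 T3.
  apply: (@excl (col c d) _ _ _ _ _ _ _ _ _ T1 T2 T3); by move=> /eqP ->.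
have Gcf : (col a b == col c f) + (col a d == col c f) + (col b d == col c f) <= 1.
  case: (@tri T col sc pr _ _ _ ab ad bd) => T1 T2 T3.
  apply: (@excl (col c f) _ _ _ _ _ _ _ _ _ T1 T2 T3); by move=> /eqP ->.
have Gdf : (col a b == col d f) + (col a c == col d f) + (col b c == col d f) <= 1.
  case: (@tri T col sc pr _ _ _ ab ac bc) => T1 T2 T3.
  apply: (@excl (col d f) _ _ _ _ _ _ _ _ _ T1 T2 T3); by move=> /eqP ->.
by case: (@final _ _ _ _ _ _ _ _ _ _ _ _ _ _ _ Fabcd Fabcf Fabdf Facdf Fbcdf Gab Gac Gad Gaf Gbc Gbd Gbf Gcd Gcf Gdf).
Qed.
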